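(* For $m \ge 1$, the number $b(m)$ of odd Grassmannian involutions of $[m]$ equals $\left\lfloor \frac{(m+1)^2}{8}\right\rfloor$.
   Context: A permutation is Grassmannian if it has at most one descent; a Grassmannian involution is a Grassmannian permutation $\pi$ with $\pi^{-1}=\pi$. A permutation is odd if it has an odd number of inversions (pairs $i<j$ with $\pi_i>\pi_j$). *)

(* Defs.v *)
From mathcomp Require Import all_boot all_fingroup.
Set Implicit Arguments. Unset Strict Implicit. Unset Printing Implicit Defensive.

(* Permutations of [m] are represented as 'S_m, i.e. permutations of
   'I_m = {0,...,m-1} (a shift of {1,...,m}; order-preserving, so descents
   and inversions are unchanged). *)

Definition descents (m : nat) (s : 'S_m) : nat :=
  #|[set i : 'I_m | [exists j : 'I_m, (val j == (val i).+1) && (s j < s i)]]|.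

Definition inversions (m : nat) (s : 'S_m) : nat :=
  #|[set p : 'I_m * 'I_m | (p.1 < p.2) && (s p.2 < s p.1)]|.

Definition grassmannian (m : nat) (s : 'S_m) : bool := descents s <= 1.

Definition involution (m : nat) (s : 'S_m) : bool := (s^-1)%g == s.

Definition odd_inv (m : nat) (s : 'S_m) : bool := odd (inversions s).

Definition b (m : nat) : nat :=
  #|[set s : 'S_m | [&& grassmannian s, involution s & odd_inv s]]|.

(* Main.v *)
Require Import Defs.
From mathcomp Require Import all_boot all_fingroup zify.
Set Implicit Arguments. Unset Strict Implicit. Unset Printing Implicit Defensive.

Definition shape (a j i : nat) : nat :=
  if (a <= i) && (i < a + j) then i + j
  else if (a + j <= i) && (i < a + j + j) then i - j else i.

Lemma shapeL a j i : a <= i -> i < a + j -> shape a j i = i + j.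
Proof. by move=> h1 h2; rewrite /shape h1 h2. Qed.
Lemma shapeR a j i : a + j <= i -> i < a + j + j -> shape a j i = i - j.
Proof.
move=> h1 h2; rewrite /shape h1 h2.
by case: (ltnP i (a + j)) => h3 //=; [lia|rewrite andbF].
Qed.
Lemma shapeO a j i : (i < a) \/ (a + j + j <= i) -> shape a j i = i.
Proof.
rewrite /shape => h.
case: (leqP a i) => h1; case: (ltnP i (a+j)) => h2; case: (leqP (a+j) i) => h3;
  case: (ltnP i (a+j+j)) => h4 //=; lia.
Qed.

Section Cls.
Variables (m d : nat) (g : nat -> nat).
Hypothesis Hg : forall i, i < m -> g i < m.
Hypothesis Hinv : forall i, i < m -> g (g i) = i.
Hypothesis Hmono : forall i, i.+1 < m -> i <> d -> g i < g i.+1.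

Lemma mono_l i k : i < k -> k <= d -> k < m -> g i < g k.
Proof.
elim: k => [|k IH] hik hkd hkm; first by [].
have h1 : g k < g k.+1 by apply: Hmono => //; lia.
case: (ltnP i k) => hik'.
  have := IH hik' ltac:(lia) ltac:(lia); lia.
have -> : i = k by lia. done.
Qed.

Lemma mono_r i k : d < i -> i < k -> k < m -> g i < g k.
Proof.
elim: k => [|k IH] hdi hik hkm; first by [].
have h1 : g k < g k.+1 by apply: Hmono => //; lia.
case: (ltnP i k) => hik'.
  have := IH hdi hik' ltac:(lia); lia.
have -> : i = k by lia. done.
Qed.

Lemma E1 i : i <= d -> i < m -> i <= g i.
Proof.
move=> hid him; case: (leqP i (g i)) => // h.
have := mono_l h ltac:(lia) him. rewrite Hinv //; lia.
Qed.

Lemma E2 i : d < i -> i < m -> g i <= i.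
Proof.
move=> hid him; case: (leqP (g i) i) => // h.
have := mono_r hid h (Hg him). rewrite Hinv //; lia.
Qed.

Lemma cross1 i : i <= d -> i < m -> g i <> i -> d < g i.
Proof.
move=> hid him hne; have := E1 hid him.
case: (ltnP d (g i)) => // h1 h2.
have := E1 h1 (Hg him); rewrite Hinv //; lia.
Qed.

Lemma cross2 i : d < i -> i < m -> g i <> i -> g i <= d.
Proof.
move=> hid him hne; have := E2 hid him.
case: (leqP (g i) d) => // h1 h2.
have := E2 h1 (Hg him); rewrite Hinv //; lia.
Qed.

Lemma intL l k : l <= k -> k <= d -> k < m -> g l <> l -> g k <> k.
Proof.
move=> hlk hkd hkm hl hk.
have hlk' : l < k.
  case: (ltngtP l k) => // e; [lia| subst; lia].
have := mono_l hlk' hkd hkm; have := cross1 (i:=l) ltac:(lia) ltac:(lia) hl; lia.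
Qed.

Lemma intR k r : d < k -> k <= r -> r < m -> g r <> r -> g k <> k.
Proof.
move=> hdk hkr hrm hr hk.
have hkr' : k < r.
  case: (ltngtP k r) => // e; [lia| subst; lia].
have := mono_r hdk hkr' hrm; have := cross2 (i:=r) ltac:(lia) hrm hr; lia.
Qed.

Lemma classify : (forall i, i < m -> g i = i) \/
  exists a j, [/\ 0 < j, a + j + j <= m & forall i, i < m -> g i = shape a j i].
Proof.
case: (ltnP d m) => hdm; last first.
  left => i him.
  case: (leqP i d) => hid.
    by case: (eqVneq (g i) i) => // /eqP hne; have := cross1 hid him hne; have := Hg him; lia.
  by lia.
case: (eqVneq (g d) d) => hgd.
  left => i him.
  have hL : forall k, k <= d -> k < m -> g k = k.
    move=> k hk hkm; case: (eqVneq (g k) k) => // /eqP hne.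
    by have := intL hk (leqnn d) hdm hne; rewrite hgd.
  case: (leqP i d) => hid; first by apply: hL.
  case: (eqVneq (g i) i) => // /eqP hne.
  have h2 := cross2 hid him hne.
  have := hL _ h2 (Hg him); rewrite Hinv // => e; by rewrite -e in hne.
right.
move/eqP: hgd => hgd.
set b := g d.
have hbd : d < b by apply: cross1.
have hbm : b < m by apply: Hg.
have hgb : g b = d by rewrite /b Hinv.
have Rmax : forall r, d < r -> r < m -> g r <> r -> r <= b.
  move=> r hdr hrm hr; case: (leqP r b) => // hbr.
  have := mono_r hbd hbr hrm; have := cross2 hdr hrm hr; rewrite hgb; lia.
have Rint : forall k, d < k -> k <= b -> g k <> k.
  move=> k hdk hkb; apply: (intR hdk hkb hbm); rewrite hgb; lia.
set a := g d.+1.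
have hd1 : g d.+1 <> d.+1 by apply: Rint; lia.
have had : a <= d by apply: cross2 => //; lia.
have hga : g a = d.+1 by rewrite /a Hinv //; lia.
have Lmin : forall l, l <= d -> g l <> l -> a <= l.
  move=> l hld hl; case: (leqP a l) => // hla.
  have hgl := cross1 (i:=l) hld ltac:(lia) hl.
  case: (eqVneq (g l) d.+1) => [hgl1|/eqP hgl1].
    by have := Hinv (i:=l) ltac:(lia); rewrite hgl1 -/a; lia.
  have h3 : d.+1 < g l by lia.
  have h4 : l < m by lia.
  have := mono_r (i:=d.+1) (k:=g l) (ltnSn d) h3 (Hg h4).
  rewrite Hinv //; lia.
have Lint : forall k, a <= k -> k <= d -> g k <> k.
  move=> k hak hkd; apply: (intL hak hkd (leq_ltn_trans hkd hdm)); rewrite hga; lia.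
have cons : forall i, a <= i -> i.+1 <= d -> g i.+1 = (g i).+1.
  move=> i hai hid.
  have hgi := cross1 (i:=i) ltac:(lia) ltac:(lia) (Lint i hai ltac:(lia)).
  have hlt := mono_l (i:=i) (k:=i.+1) ltac:(lia) hid ltac:(lia).
  case: (leqP (g i.+1) (g i).+1) => hh; first by lia.
  have hne1 : g i.+1 <> i.+1 by apply: Lint; lia.
  have hne2 : g (g i.+1) <> g i.+1 by rewrite Hinv; lia.
  have hgim : g i.+1 < m by apply: Hg; lia.
  have hgi1 : d < g i.+1 by lia.
  have hrb := Rmax (g i.+1) hgi1 hgim hne2.
  have hv : g (g i).+1 <> (g i).+1 by apply: Rint; lia.
  have h1 := mono_r (i:=g i) (k:=(g i).+1) ltac:(lia) ltac:(lia) ltac:(lia).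
  have h2 := mono_r (i:=(g i).+1) (k:=g i.+1) ltac:(lia) hh hgim.
  rewrite Hinv in h1; last lia.
  rewrite Hinv in h2; last lia.
  lia.
have down : forall t, t <= d - a -> g (d - t) = b - t.
  elim=> [|t IH] ht; first by rewrite !subn0.
  have := cons (d - t.+1) ltac:(lia) ltac:(lia).
  have -> : (d - t.+1).+1 = d - t by lia.
  rewrite IH; last lia.
  have := cross1 (i:=d - t.+1) ltac:(lia) ltac:(lia) (Lint (d - t.+1) ltac:(lia) ltac:(lia)).
  lia.
have onL : forall i, a <= i -> i <= d -> g i = i + (b - d).
  move=> i hai hid; have := down (d - i) ltac:(lia).
  have -> : d - (d - i) = i by lia. lia.
have hj : a + (b - d) = d.+1 by have := onL a (leqnn a) had; rewrite hga; lia.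
exists a, (b - d); split; [lia|lia|].
move=> i him.
case: (leqP a i) => hai; last first.
  rewrite shapeO; last by left.
  case: (eqVneq (g i) i) => // /eqP hne.
  by have := Lmin i ltac:(lia) hne; lia.
case: (ltnP i (a + (b - d))) => hi1.
  by rewrite shapeL //; apply: onL; lia.
case: (ltnP i (a + (b - d) + (b - d))) => hi2.
  rewrite shapeR //.
  have hne : g i <> i by apply: Rint; lia.
  have hgi := cross2 (i:=i) ltac:(lia) him hne.
  have hne2 : g (g i) <> g i by rewrite Hinv; lia.
  have hag := Lmin _ hgi hne2.
  have := onL _ hag hgi; rewrite Hinv //; lia.
rewrite shapeO; last by right.
case: (eqVneq (g i) i) => // /eqP hne.
have := Rmax i ltac:(lia) him hne; lia.
Qed.
End Cls.

Definition Sc (n : nat) := \sum_(j < n) odd j * (n - j.*2).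
Definition Tc (n : nat) := \sum_(j < n) (~~ odd j) * (n - j.*2).
Definition Uc (n : nat) := \sum_(j < n) (n - j.*2).

Lemma ST n : Sc n + Tc n = Uc n.
Proof.
rewrite /Sc /Tc /Uc -big_split /=; apply: eq_bigr => j _.
by case: (odd j); rewrite /= ?mul1n ?mul0n ?addn0.
Qed.

Lemma S2 n : Sc n.+2 = Tc n.
Proof.
rewrite /Sc big_ord_recl /= mul0n add0n big_ord_recr /=.
have -> : n.+2 - n.+1.*2 = 0 by lia.
rewrite muln0 addn0 /Tc; apply: eq_bigr => j _ /=.
rewrite /bump add0n.
congr (_ * _); lia.
Qed.

Lemma U2 n : Uc n.+2 = Uc n + n.+2.
Proof.
rewrite /Uc big_ord_recl /= big_ord_recr /=.
have -> : n.+2 - n.+1.*2 = 0 by lia.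
by rewrite addn0 subn0 addnC; congr (_ + _).
Qed.

Lemma S4 n : Sc n.+4 = Sc n + n.+2.
Proof.
have h1 := ST n. have h2 := ST n.+2. have h3 := S2 n. have h4 := S2 n.+2.
have h5 := U2 n. lia.
Qed.

Lemma S_closed n : Sc n = n ^ 2 %/ 8.
Proof.
elim/ltn_ind: n => -[|[|[|[|n]]]] IH.
- by rewrite /Sc big_ord0.
- by rewrite /Sc big_ord_recl big_ord0.
- by rewrite /Sc !big_ord_recl big_ord0.
- by rewrite /Sc !big_ord_recl big_ord0.
rewrite S4 IH; last lia.
have -> : n.+4 ^ 2 = n ^ 2 + 8 * n.+2 by rewrite !expnS expn0; lia.
move: (n ^ 2) => N. lia.
Qed.

Lemma sum_lt n k : \sum_(a < n) (a < k) = minn n k.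
Proof.
elim: n => [|n IH]; first by rewrite big_ord0 min0n.
rewrite big_ord_recr /= IH; case: (ltnP n k) => h /=; lia.
Qed.

Lemma countP m :
  #|[set p : 'I_m.+1 * 'I_m.+1 | odd p.2 && (p.1 + p.2 + p.2 <= m)]| = Sc m.+1.
Proof.
rewrite -sum1_card big_mkcond /=.
transitivity (\sum_(a < m.+1) \sum_(j < m.+1) (if odd j && (a + j + j <= m) then 1 else 0)).
  by rewrite pair_bigA; apply: eq_bigr => -[a j] _; rewrite inE.
rewrite exchange_big /Sc; apply: eq_bigr => j _.
case: (odd j) => /=; last by rewrite big1.
rewrite mul1n -[RHS](_ : minn m.+1 (m.+1 - j.*2) = _); last by lia.
rewrite -sum_lt; apply: eq_bigr => a _.
have -> : (a + j + j <= m) = (a < m.+1 - j.*2).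
  by apply/idP/idP; lia.
by case: (_ < _).
Qed.
Ltac shtac := rewrite /shape; repeat (case: ifP => ?); lia.
Lemma shape_inv a j i : shape a j (shape a j i) = i.
Proof. rewrite {2}/shape. case: (leqP a i) => ?; case: (ltnP i (a+j)) => ?; case: (leqP (a+j) i) => ?;
  case: (ltnP i (a+j+j)) => ? /=; shtac. Qed.
Lemma shape_lt N a j i : a + j + j <= N -> i < N -> shape a j i < N.
Proof. move=> *; shtac. Qed.
Lemma shape_desc a j i : shape a j i.+1 < shape a j i -> i.+1 = a + j.
Proof. shtac. Qed.
Lemma shape_inj a j a' j' : 0 < j -> 0 < j' -> shape a j a = shape a' j' a -> shape a j a' = shape a' j' a' -> a = a' /\ j = j'.
Proof. move=> ? ?. shtac. Qed.

Lemma card_int N a j : a + j <= N -> #|[set i : 'I_N | a <= i < a + j]| = j.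
Proof.
move=> h.
have e1 := sum_lt N (a + j). have e2 := sum_lt N a.
have E : #|[set i : 'I_N | a <= i < a + j]| = \sum_(i < N) ((a <= i) && (i < a + j)).
  rewrite -sum1_card big_mkcond /=; apply: eq_bigr => i _.
  by rewrite inE; case: (_ && _).
have : \sum_(i < N) (i < a + j) = \sum_(i < N) (i < a) + #|[set i : 'I_N | a <= i < a + j]|.
  rewrite E -big_split /=; apply: eq_bigr => i _.
  case: (ltnP i a) => h1; case: (ltnP i (a + j)) => h2 /=; lia.
lia.
Qed.

Section P.
Variable n : nat.
Local Notation N := n.+1.

Definition gs (s : 'S_N) (i : nat) : nat := if i < N then nat_of_ord (s (inord i)) else i.
Lemma gsE s (i : 'I_N) : gs s i = s i.
Proof. by rewrite /gs ltn_ord inord_val. Qed.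

Lemma inv_shape (s : 'S_N) a j : a + j + j <= N ->
  (forall i : 'I_N, nat_of_ord (s i) = shape a j i) -> inversions s = j * j.
Proof.
move=> hN Hs; rewrite /inversions.
have -> : [set p : 'I_N * 'I_N | (p.1 < p.2) && (s p.2 < s p.1)] =
  setX [set i : 'I_N | a <= i < a + j] [set i : 'I_N | a + j <= i < a + j + j].
  apply/setP => -[x y]; rewrite !inE /= !Hs.
  move: (ltn_ord x) (ltn_ord y); move: (nat_of_ord x) (nat_of_ord y) => x' y' _ _.
  shtac.
by rewrite cardsX !card_int //; lia.
Qed.

Lemma desc_shape (s : 'S_N) a j : a + j + j <= N ->
  (forall i : 'I_N, nat_of_ord (s i) = shape a j i) -> descents s <= 1.
Proof.
move=> hN Hs; rewrite /descents; apply/card_le1_eqP => x y; rewrite !inE.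
move=> /existsP[k /andP[/eqP hk hlt]] /existsP[k' /andP[/eqP hk' hlt']].
have {}hk : (k : nat) = (x : nat).+1 := hk.
have {}hk' : (k' : nat) = (y : nat).+1 := hk'.
rewrite !Hs hk in hlt; rewrite !Hs hk' in hlt'.
have := shape_desc hlt; have := shape_desc hlt' => e1 e2.
apply: val_inj => /=; lia.
Qed.

Lemma id_inv (s : 'S_N) : (forall i : 'I_N, nat_of_ord (s i) = i) -> inversions s = 0.
Proof.
move=> Hs; rewrite /inversions; apply/eqP; rewrite cards_eq0; apply/eqP/setP => -[x y].
rewrite !inE /= !Hs; lia.
Qed.

Lemma classify_perm (s : 'S_N) : grassmannian s -> involution s -> odd_inv s ->
  exists a j, [/\ odd j, a + j + j <= N & forall i : 'I_N, nat_of_ord (s i) = shape a j i].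
Proof.
move=> hg hi ho.
have ss : forall x, s (s x) = x.
  move=> x; move/eqP: hi => hi. by rewrite -{1}hi permK.
set D := [set i : 'I_N | [exists k : 'I_N, (val k == (val i).+1) && (s k < s i)]].
have hD : #|D| <= 1 by [].
have [d Hd] : exists d, forall x : 'I_N, x \in D -> nat_of_ord x = d.
  case: (set_0Vmem D) => [->|[x hx]].
    by exists 0 => x; rewrite inE.
  exists (nat_of_ord x) => y hy; move/card_le1_eqP: hD => h; by rewrite (h _ _ hy hx).
have Hg : forall i, i < N -> gs s i < N.
  by move=> i hi'; rewrite /gs hi'; apply: ltn_ord.
have Hinv : forall i, i < N -> gs s (gs s i) = i.
  move=> i hi'; rewrite {2}/gs hi' gsE ss /= inordK //.
have Hmono : forall i, i.+1 < N -> i <> d -> gs s i < gs s i.+1.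
  move=> i hi1 hid; rewrite /gs hi1 ifT; last lia.
  case: (ltngtP (s (inord i)) (s (inord i.+1))) => // h.
    have : inord i \in D.
      rewrite inE; apply/existsP; exists (inord i.+1).
      rewrite h andbT; apply/eqP.
      change (nat_of_ord (inord i.+1 : 'I_N) = (nat_of_ord (inord i : 'I_N)).+1).
      by rewrite !inordK //; lia.
    by move/Hd; rewrite inordK //; lia.
  move/val_inj/perm_inj: h => /(congr1 (@nat_of_ord N)); rewrite !inordK //; lia.
case: (classify Hg Hinv Hmono) => [hid|[a [j [hj hN Hs]]]].
  have : inversions s = 0 by apply: id_inv => i; rewrite -gsE hid.
  by move: ho; rewrite /odd_inv => /[swap] ->.
have Hs' : forall i : 'I_N, nat_of_ord (s i) = shape a j i by move=> i; rewrite -gsE Hs.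
exists a, j; split => //.
move: ho; rewrite /odd_inv (inv_shape hN Hs') oddM; by case: (odd j).
Qed.
End P.

Section F.
Variable n : nat.
Local Notation N := n.+1.

Definition shm (a j i : nat) := if a + j + j <= N then shape a j i else i.
Lemma shm_lt a j i : i < N -> shm a j i < N.
Proof. by rewrite /shm; case: ifP => // h hi; apply: shape_lt. Qed.
Lemma shm_inv a j i : shm a j (shm a j i) = i.
Proof. by rewrite /shm; case: ifP => h; rewrite h /= ?shape_inv. Qed.

Definition fsh a j (i : 'I_N) : 'I_N := inord (shm a j i).
Lemma fshK a j : cancel (fsh a j) (fsh a j).
Proof.
move=> i; apply: val_inj => /=; rewrite /fsh [X in shm _ _ X]inordK ?shm_lt // shm_inv inordK //.
Qed.

Definition Fp (p : 'I_N.+1 * 'I_N.+1) : 'S_N := perm (can_inj (fshK p.1 p.2)).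
Lemma FpE p (i : 'I_N) : nat_of_ord (Fp p i) = shm p.1 p.2 i.
Proof. by rewrite permE /fsh inordK // shm_lt. Qed.

Definition Pset := [set p : 'I_N.+1 * 'I_N.+1 | odd p.2 && (p.1 + p.2 + p.2 <= N)].

Lemma FpS p : p \in Pset -> forall i : 'I_N, nat_of_ord (Fp p i) = shape p.1 p.2 i.
Proof. by rewrite inE => /andP[_ h] i; rewrite FpE /shm h. Qed.

Lemma Fp_inj : {in Pset &, injective Fp}.
Proof.
move=> [a j] [a' j'] hp hq e.
have hp' := hp; have hq' := hq.
rewrite inE /= in hp'; rewrite inE /= in hq'.
case/andP: hp' => oj hN; case/andP: hq' => oj' hN'.
have E : forall i, i < N -> shape a j i = shape a' j' i.
  move=> i hi; have := congr1 (fun s : 'S_N => nat_of_ord (s (inord i))) e => /=.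
  by rewrite (FpS hp) (FpS hq) /= inordK.
have j0 : 0 < j by case: (nat_of_ord j) oj.
have j0' : 0 < j' by case: (nat_of_ord j') oj'.
have [] := shape_inj j0 j0' (E a ltac:(lia)) (E a' ltac:(lia)).
by move=> /val_inj -> /val_inj ->.
Qed.

Lemma set_eq : [set s : 'S_N | [&& grassmannian s, involution s & odd_inv s]] = Fp @: Pset.
Proof.
apply/setP => s; rewrite inE; apply/idP/imsetP.
  case/and3P => hg hi ho.
  have [a [j [oj hN Hs]]] := classify_perm hg hi ho.
  have ha : a < N.+1 by lia.
  have hj : j < N.+1 by lia.
  exists (inord a, inord j).
    by rewrite inE /= !inordK // oj.
  apply/permP => i; apply: val_inj.
  change (nat_of_ord (s i) = nat_of_ord (Fp (inord a, inord j) i)).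
  by rewrite FpE /= !inordK // /shm hN Hs.
case=> p hp ->.
have hp' := hp; rewrite inE in hp'; case/andP: hp' => oj hN.
have Hs := FpS hp.
have ss : forall i, Fp p (Fp p i) = i.
  move=> i; apply: val_inj.
  change (nat_of_ord (Fp p (Fp p i)) = nat_of_ord i).
  by rewrite !Hs shape_inv.
apply/and3P; split.
- exact: desc_shape hN Hs.
- apply/eqP/permP => i.
  by rewrite -{1}(ss i) permK.
- by rewrite /odd_inv (inv_shape hN Hs) oddM oj.
Qed.
End F.

Theorem mainTheorem19 (m : nat) : 1 <= m -> b m = (m.+1 ^ 2) %/ 8.
Proof.
case: m => [//|n] _.
rewrite /b set_eq card_in_imset; last exact: Fp_inj.
by rewrite /Pset countP S_closed.
Qed.
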